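(* The minimal word (with respect to alphabetical order) of any equivalence class of words under $\sim$ is reduced.
   Context: $\mathcal{A}$ is the free associative $\mathbb{C}$-algebra on noncommuting generators $L,R$; words are finite products of these letters and a subword is a contiguous block of letters. A word is balanced if it contains equally many $L$'s and $R$'s. $\mathcal{J}$ is the two-sided ideal generated by $\{FG-GF : F,G \text{ nonempty balanced words}\}$, and $X\sim Y$ means $X-Y\in\mathcal{J}$; each equivalence class is finite. Alphabetical order is the lexicographic order with $L$ before $R$, a proper prefix preceding its extensions. A word is prime if it is nonempty, balanced, and not a product of two nonempty balanced words. For balanced $W=a_1\cdots a_n$, $e_k(W)=\sum_{i=1}^k\overline{a_i}$ with $\overline{R}=1$, $\overline{L}=-1$. A prime $P$ of length $n$ is an upper prime if $e_k(P)>0$ for $1\le k\le n-1$, and a lower prime if $e_k(P)<0$ for $1\le k\le n-1$. A word is reduced if it contains no subword $UD$ with $U$ an upper prime and $D$ a lower prime. *)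

(* Defs.v *)
From HB Require Import structures.
From mathcomp Require Import all_boot all_order all_algebra.
From mathcomp Require Import complex.
From mathcomp Require Import Rstruct.
Set Implicit Arguments. Unset Strict Implicit. Unset Printing Implicit Defensive.
Import Order.TTheory GRing.Theory Num.Theory.

Definition CC : Type := (complex Rdefinitions.R).
HB.instance Definition _ := GRing.Field.on CC.

Inductive letter := Lt | Rt.
Definition letter_eqb (a b : letter) : bool :=
  match a, b with Lt, Lt | Rt, Rt => true | _, _ => false end.
Lemma letter_eqP : Equality.axiom letter_eqb.
Proof. by case; case; constructor. Qed.
HB.instance Definition _ := hasDecEq.Build letter letter_eqP.

Definition word := seq letter.

Definition balanced (w : word) : bool := count_mem Lt w == count_mem Rt w.

Definition prime_word (w : word) : Prop :=
  w != [::] /\ balanced w /\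
  ~ (exists u v : word, [/\ u != [::], v != [::], balanced u, balanced v & w = u ++ v]).

Definition lval (a : letter) : int := if a is Rt then 1%R else (-1)%R.
Definition e_ (k : nat) (w : word) : int := (\sum_(a <- take k w) lval a)%R.

Definition upper_prime (w : word) : Prop :=
  prime_word w /\ forall k, (1 <= k <= (size w).-1)%N -> (0 < e_ k w)%R.
Definition lower_prime (w : word) : Prop :=
  prime_word w /\ forall k, (1 <= k <= (size w).-1)%N -> (e_ k w < 0)%R.

Definition reduced (w : word) : Prop :=
  ~ (exists x u d y : word, [/\ upper_prime u, lower_prime d & w = x ++ u ++ d ++ y]).

Fixpoint alph_le (u v : word) : bool :=
  match u, v with
  | [::], _ => true
  | _ :: _, [::] => false
  | a :: u', b :: v' =>
      if a == b then alph_le u' v' else (a == Lt) && (b == Rt)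
  end.

(* X ~ Y iff X - Y lies in the two-sided ideal J of the free algebra C<L,R>
   generated by FG - GF (F, G nonempty balanced).  Elements of the free algebra
   are finitely supported coefficient functions on words; J is the C-span of the
   elements U (FG - GF) V with U, V words.  So X ~ Y iff there is a finite list of
   terms (c, (U, F, G, V)) such that, coefficientwise on every word w,
   [X = w] - [Y = w] = sum c * ([U F G V = w] - [U G F V = w]). *)
Definition gen_ok (t : CC * (word * word * word * word)) : bool :=
  let: (_, (_, F, G, _)) := t in
  [&& F != [::], G != [::], balanced F & balanced G].

Definition coef_term (w : word) (t : CC * (word * word * word * word)) : CC :=
  let: (c, (U, F, G, V)) := t in
  (c * (((U ++ F ++ G ++ V) == w)%:R - ((U ++ G ++ F ++ V) == w)%:R))%R.

Definition equiv_words (X Y : word) : Prop :=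
  exists s : seq (CC * (word * word * word * word)),
    all gen_ok s /\
    forall w : word, (((X == w)%:R - (Y == w)%:R : CC) = \sum_(t <- s) coef_term w t)%R.

(* Main.v *)
Require Import Defs.
From mathcomp Require Import all_boot all_algebra.
Import GRing.Theory.

Lemma alph_le_cat (x a b : word) : alph_le (x ++ a) (x ++ b) = alph_le a b.
Proof. by elim: x => //= c x IH; rewrite eqxx. Qed.

Lemma balanced_size2 (w : word) : w != [::] -> balanced w -> (1 < size w)%N.
Proof.
rewrite /balanced => nz /eqP H.
have Hs : size w = (count_mem Lt w + count_mem Rt w)%N.
  elim: w {nz H} => //= c w IH; rewrite IH; case: c => /=; rewrite ?add0n ?add1n ?addn0 ?addn1 ?addSn ?addnS //.
have : (0 < size w)%N by case: w nz {H Hs}.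
rewrite Hs H; case: (count_mem Rt w) => // n _; by rewrite addSn addnS.
Qed.

Lemma upper_head u : upper_prime u -> exists u', u = Rt :: u'.
Proof.
case=> [[nz [bal _]] He].
have s2 := balanced_size2 u nz bal.
have := He 1%N; rewrite /e_.
move: nz bal s2 He; case: u => // c u' _ _ s2 _ /=.
move: s2; case: c => [|] s2; last by exists u'.
rewrite take0 big_cons big_nil /= addr0.
have -> : (1 <= (size u')) by case: u' s2.
by move=> /(_ isT).
Qed.

Lemma lower_head u : lower_prime u -> exists u', u = Lt :: u'.
Proof.
case=> [[nz [bal _]] He].
have s2 := balanced_size2 u nz bal.
have := He 1%N; rewrite /e_.
move: nz bal s2 He; case: u => // c u' _ _ s2 _ /=.
move: s2; case: c => [|] s2; first by exists u'.
rewrite take0 big_cons big_nil /= addr0.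
have -> : (1 <= (size u')) by case: u' s2.
by move=> /(_ isT).
Qed.

Theorem lemma6p2 (W : word) :
  (forall W' : word, equiv_words W W' -> alph_le W W') -> reduced W.
Proof.
move=> Hmin [x [u [d [y [Hu Hd HW]]]]].
have Heq : equiv_words W (x ++ d ++ u ++ y).
  exists [:: (1%R, (x, u, d, y))]; split.
    case: Hu => [[nzu [bu _]] _]; case: Hd => [[nzd [bd _]] _].
    by rewrite /= nzu nzd bu bd.
  by move=> w; rewrite big_cons big_nil /= addr0 mul1r HW.
have := Hmin _ Heq; rewrite HW alph_le_cat.
have [u' Eu] := upper_head _ Hu; have [d' Ed] := lower_head _ Hd.
rewrite Eu Ed /=; exact: id.
Qed.
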